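(* Let $\nu>0$, let $K$ be a smooth positive function with antiderivative $J(u)=\int K(u)\,du$ assumed invertible, and let $A\neq 0$, $B$, $D\neq 0$, $Q$ be constants. Suppose $C(u)=D\,K(u)\left(AJ(u)+B\right)^{1/A}$. Then, on any region of $z>0$, $t>0$ where $Q+\frac{2(2A+1-\nu)}{D}t>0$ and the argument below lies in the range of $J$, $$u(z,t)=J^{-1}\!\left(\frac{1}{A}z^{-2A}\left(Q+\frac{2(2A+1-\nu)}{D}t\right)^{A}-\frac{B}{A}\right)$$ is a solution of $C(u)u_t=z^{-\nu}\left(K(u)z^{\nu}u_z\right)_z$. *)

(* Defs.v *)
From Stdlib Require Import Reals.
From Coquelicot Require Import Coquelicot.
Open Scope R_scope.

Definition Ccoef (K J : R -> R) (A B D : R) (w : R) : R :=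
  D * K w * Rpower (A * J w + B) (1 / A).

Definition sol_arg (nu A B D Q z t : R) : R :=
  1 / A * Rpower z (-2 * A) * Rpower (Q + 2 * (2 * A + 1 - nu) / D * t) A - B / A.

Definition sol_u (Jinv : R -> R) (nu A B D Q z t : R) : R :=
  Jinv (sol_arg nu A B D Q z t).

(* Main.v *)
Require Import Defs.
From Stdlib Require Import Reals Lra.
From Coquelicot Require Import Coquelicot.


Section Inv.
Variables (K J Jinv : R -> R).
Hypothesis Kpos : forall x : R, 0 < K x.
Hypothesis HJ : forall x : R, is_derive J x (K x).
Hypothesis HJinv : forall x : R, Jinv (J x) = x.

Lemma J_incr : forall x y, x < y -> J x < J y.
Proof.
  intros x y Hxy.
  destruct (MVT_cor2 J K x y Hxy) as [c [Hc _]].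
  { intros c _. apply is_derive_Reals, HJ. }
  assert (0 < K c * (y - x)) by (apply Rmult_lt_0_compat; [apply Kpos|lra]).
  lra.
Qed.

Lemma J_cont : forall x, continuity_pt J x.
Proof.
  intros x. apply continuity_pt_filterlim. apply (ex_derive_continuous (K:=R_AbsRing) (V:=R_NormedModule)).
  eexists; apply HJ.
Qed.

Definition Jprf (a : R) : derivable_pt J a :=
  exist _ (K a) (proj1 (is_derive_Reals J a (K a)) (HJ a)).

Lemma Jinv_prop : forall w y, J (w-1) < y < J (w+1) ->
  J (Jinv y) = y /\ is_derive Jinv y (/ K (Jinv y)).
Proof.
  intros w y Hy.
  assert (Hw : w - 1 < w + 1) by lra.
  pose proof (J_incr _ _ Hw) as HJw.
  destruct (IVT_gen J (w-1) (w+1) y) as [x [Hx Jx]].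
  { intros a; apply J_cont. }
  { rewrite Rmin_left, Rmax_right; lra. }
  rewrite Rmin_left, Rmax_right in Hx by lra.
  assert (Hyx : Jinv y = x) by (rewrite <- Jx; apply HJinv).
  split. { rewrite Hyx; exact Jx. }
  assert (Hcont : continuity_pt Jinv y).
  { apply (Ranalysis5.continuity_pt_recip_prelim J Jinv (w-1) (w+1)); auto.
    - intros a b _ Hab _; apply J_incr; auto.
    - intros a _; unfold comp, id; apply HJinv.
    - intros a _; apply J_cont. }
  assert (Hcomp : forall x0, J (w-1) <= x0 <= J (w+1) -> comp J Jinv x0 = id x0).
  { intros x0 Hx0. unfold comp, id.
    destruct (IVT_gen J (w-1) (w+1) x0) as [x1 [_ Jx1]].
    { intros a; apply J_cont. }
    { rewrite Rmin_left, Rmax_right; lra. }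
    rewrite <- Jx1, HJinv; reflexivity. }
  assert (Hincr : Jinv (J (w-1)) <= Jinv y <= Jinv (J (w+1))).
  { rewrite !HJinv; lra. }
  pose proof (Ranalysis5.derivable_pt_lim_recip_interv J Jinv (J (w-1)) (J (w+1)) y
     (fun a _ => Jprf a) Hcont HJw Hy Hincr Hcomp) as HD.
  simpl in HD.
  apply is_derive_Reals.
  replace (/ K (Jinv y)) with (1 / K (Jinv y)) by (field; apply Rgt_not_eq, Kpos).
  apply HD. apply Rgt_not_eq, Kpos.
Qed.
End Inv.

Lemma dpow : forall e y, 0 < y -> is_derive (fun y => Rpower y e) y (e * Rpower y (e-1)).
Proof. intros e y Hy. apply is_derive_Reals, derivable_pt_lim_power, Hy. Qed.

Lemma loc_int (f : R -> R) z a b : continuous f z -> a < f z < b ->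
  locally z (fun y => a < f y < b).
Proof.
  intros Hc Hab.
  assert (He : 0 < Rmin (f z - a) (b - f z)) by (apply Rmin_pos; lra).
  apply (proj1 (filterlim_locally f (f z))) with (eps := mkposreal _ He) in Hc.
  eapply filter_imp; [|exact Hc].
  intros y Hy. simpl in Hy. unfold ball in Hy; simpl in Hy. unfold AbsRing_ball, abs, minus, plus, opp in Hy; simpl in Hy.
  pose proof (Rmin_l (f z - a) (b - f z)). pose proof (Rmin_r (f z - a) (b - f z)).
  apply Rabs_def2 in Hy. lra.
Qed.

Lemma loc_pos z : 0 < z -> locally z (fun y => 0 < y).
Proof.
  intros Hz. exists (mkposreal _ Hz). intros y Hy.
  unfold ball in Hy; simpl in Hy. unfold AbsRing_ball, abs, minus, plus, opp in Hy; simpl in Hy.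
  apply Rabs_def2 in Hy. lra.
Qed.
Lemma is_derive_eq (f : R -> R) x l l' : is_derive f x l -> l = l' -> is_derive f x l'.
Proof. intros H ->; exact H. Qed.
Lemma dS_gen : forall A Pt C y, A <> 0 -> 0 < y -> is_derive (fun y => 1 / A * Rpower y (-2 * A) * Pt - C) y (-2 * Rpower y (-2*A-1) * Pt).
intros A Pt C y HA Hy.
eapply is_derive_eq.
{ apply (is_derive_minus (K:=R_AbsRing)(V:=R_NormedModule)).
  2: exact (is_derive_const (K:=R_AbsRing)(V:=R_NormedModule) _ _).
  apply Derive.is_derive_mult. 2: exact (is_derive_const (K:=R_AbsRing)(V:=R_NormedModule) _ _).
  apply is_derive_scal. apply dpow, Hy. }
replace (-2*A-1) with (-2*A - 1) by ring. simpl. unfold minus, plus, opp, zero; simpl. field. auto.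
Qed.
Lemma dT_gen : forall A z Q c C t, A <> 0 -> 0 < Q + c * t -> is_derive (fun s => 1 / A * Rpower z (-2 * A) * Rpower (Q + c * s) A - C) t
                 (1/A * Rpower z (-2*A) * (A * Rpower (Q + c*t) (A-1) * c)).
intros A z Q c C t HA HP.
eapply is_derive_eq.
{ apply (is_derive_minus (K:=R_AbsRing)(V:=R_NormedModule)).
  2: exact (is_derive_const (K:=R_AbsRing)(V:=R_NormedModule) _ _).
  apply is_derive_scal.
  apply (is_derive_comp (fun x => Rpower x A) (fun s => Q + c * s)).
  apply dpow, HP.
  eapply is_derive_eq. apply (is_derive_plus (K:=R_AbsRing)(V:=R_NormedModule)).
  exact (is_derive_const (K:=R_AbsRing)(V:=R_NormedModule) _ _).
  apply is_derive_scal. apply (is_derive_id (K:=R_AbsRing)). reflexivity. }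
simpl. unfold minus, plus, opp, zero, scal, one; simpl. unfold mult; simpl. ring.
Qed.

Theorem mainTheorem7
  (nu : R) (K J Jinv : R -> R) (A B D Q : R)
  (Hnu : 0 < nu)
  (Ksmooth : forall (n : nat) (x : R), ex_derive_n K n x)
  (Kpos : forall x : R, 0 < K x)
  (HJ : forall x : R, is_derive J x (K x))
  (HJinv : forall x : R, Jinv (J x) = x)
  (HA : A <> 0) (HD : D <> 0)
  (z t : R) (Hz : 0 < z) (Ht : 0 < t)
  (HQ : 0 < Q + 2 * (2 * A + 1 - nu) / D * t)
  (Hrange : exists w : R, J w = sol_arg nu A B D Q z t) :
  let u := sol_u Jinv nu A B D Q in
  locally z (fun y => ex_derive (fun y' => u y' t) y) /\
  exists ut flux_z : R,
    is_derive (fun s => u z s) t ut /\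
    is_derive (fun y => K (u y t) * Rpower y nu * Derive (fun y' => u y' t) y)
      z flux_z /\
    Ccoef K J A B D (u z t) * ut = Rpower z (- nu) * flux_z.
Proof.
  intros u. unfold u, sol_u.
  set (c := 2 * (2 * A + 1 - nu) / D) in *.
  set (P := Q + c * t) in *.
  set (Pt := Rpower P A).
  destruct Hrange as [w Hw].
  assert (Hab : J (w-1) < J w < J (w+1)) by (split; apply (J_incr K J Kpos HJ); lra).
  assert (dS : forall y, 0 < y -> is_derive (fun y => sol_arg nu A B D Q y t) y
                 (-2 * Rpower y (-2*A-1) * Pt)).
  { intros y Hy. unfold sol_arg. exact (dS_gen A Pt (B/A) y HA Hy). }
  assert (dT : is_derive (fun s => sol_arg nu A B D Q z s) t
                 (1/A * Rpower z (-2*A) * (A * Rpower P (A-1) * c))).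
  { unfold sol_arg. exact (dT_gen A z Q c (B/A) t HA HQ). }
  assert (Hloc : locally z (fun y => 0 < y /\ J (w-1) < sol_arg nu A B D Q y t < J (w+1))).
  { apply filter_and. apply loc_pos, Hz.
    apply loc_int. apply (ex_derive_continuous (K:=R_AbsRing) (V:=R_NormedModule)).
    eexists; apply dS, Hz. rewrite <- Hw; exact Hab. }
  assert (dU : forall y, 0 < y /\ J (w-1) < sol_arg nu A B D Q y t < J (w+1) ->
     is_derive (fun y' => Jinv (sol_arg nu A B D Q y' t)) y
       ((-2 * Rpower y (-2*A-1) * Pt) * / K (Jinv (sol_arg nu A B D Q y t)))).
  { intros y [Hy Hr].
    apply (is_derive_comp Jinv (fun y' => sol_arg nu A B D Q y' t)).
    - apply (Jinv_prop K J Jinv Kpos HJ HJinv w), Hr.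
    - apply dS, Hy. }
  split.
  { eapply filter_imp; [|exact Hloc]. intros y Hy. eexists; apply dU, Hy. }
  set (S0 := sol_arg nu A B D Q z t).
  assert (HS0 : J (w-1) < S0 < J (w+1)) by (unfold S0; rewrite <- Hw; exact Hab).
  destruct (Jinv_prop K J Jinv Kpos HJ HJinv w S0 HS0) as [JS0 dJ0].
  set (Fz := nu * Rpower z (nu-1) * (-2 * Rpower z (-2*A-1) * Pt)
             + Rpower z nu * (-2 * ((-2*A-1) * Rpower z (-2*A-1-1)) * Pt)).
  assert (dF : is_derive (fun y => Rpower y nu * (-2 * Rpower y (-2*A-1) * Pt)) z Fz).
  { eapply is_derive_eq.
    { apply Derive.is_derive_mult. apply dpow, Hz.
      apply Derive.is_derive_mult. apply is_derive_scal. apply dpow, Hz.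
      exact (is_derive_const (K:=R_AbsRing)(V:=R_NormedModule) _ _). }
    unfold Fz, zero; simpl. ring. }
  exists ((1/A * Rpower z (-2*A) * (A * Rpower P (A-1) * c)) * / K (Jinv S0)), Fz.
  split.
  { apply (is_derive_comp Jinv (fun s => sol_arg nu A B D Q z s)); [exact dJ0 | exact dT]. }
  split.
  { apply is_derive_ext_loc with (f := fun y => Rpower y nu * (-2 * Rpower y (-2*A-1) * Pt)).
    2: exact dF.
    eapply filter_imp; [|exact Hloc]. intros y Hy.
    simpl in Hy. replace (Derive (fun y' : R => Jinv (sol_arg nu A B D Q y' t)) y) with (-2 * Rpower y (-2 * A - 1) * Pt * / K (Jinv (sol_arg nu A B D Q y t))) by (symmetry; apply is_derive_unique, dU, Hy).
    match goal with |- @eq _ ?a ?b => change (@eq R a b) end. field. apply Rgt_not_eq, Kpos. }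
  unfold Ccoef. rewrite JS0.
  assert (HK : K (Jinv S0) <> 0) by apply Rgt_not_eq, Kpos.
  assert (E0 : A*S0 + B = Rpower z (-2*A) * Pt) by (unfold S0, sol_arg, Pt, P, c; field; auto).
  assert (E1 : Rpower z (-2) * Rpower z (-2*A) = Rpower z (-2*A-2))
    by (rewrite <- Rpower_plus; f_equal; ring).
  assert (E2 : P * Rpower P (A-1) = Pt).
  { rewrite <- (Rpower_1 P) at 1 by exact HQ. rewrite <- Rpower_plus. unfold Pt; f_equal; ring. }
  assert (E3 : Rpower z (nu-1) * Rpower z (-2*A-1) = Rpower z nu * Rpower z (-2*A-2))
    by (rewrite <- !Rpower_plus; f_equal; ring).
  assert (E4 : Rpower z (-nu) * Rpower z nu = 1).
  { rewrite <- Rpower_plus. replace (-nu + nu) with 0 by ring. apply Rpower_O, Hz. }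
  rewrite E0, <- Rpower_mult_distr by (unfold Rpower; apply exp_pos).
  rewrite !Rpower_mult. unfold Pt at 1. rewrite Rpower_mult.
  replace (-2*A*(1/A)) with (-2) by (field; auto).
  replace (A*(1/A)) with 1 by (field; auto).
  rewrite Rpower_1 by exact HQ.
  replace (D * K (Jinv S0) * (Rpower z (-2) * P) *
     (1 / A * Rpower z (-2 * A) * (A * Rpower P (A - 1) * c) * / K (Jinv S0)))
    with (D * c * (Rpower z (-2) * Rpower z (-2*A)) * (P * Rpower P (A-1)))
    by (field; auto).
  rewrite E1, E2.
  replace Fz with ((Rpower z (nu-1) * Rpower z (-2*A-1)) * (-2 * nu * Pt)
      + Rpower z nu * Rpower z (-2*A-2) * (2*(2*A+1)*Pt))
    by (unfold Fz; replace (-2*A-1-1) with (-2*A-2) by ring; ring).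
  rewrite E3.
  replace (Rpower z (- nu) * (Rpower z nu * Rpower z (-2 * A - 2) * (-2 * nu * Pt) +
      Rpower z nu * Rpower z (-2 * A - 2) * (2 * (2 * A + 1) * Pt)))
    with ((Rpower z (-nu) * Rpower z nu) * Rpower z (-2*A-2) * Pt * (2*(2*A+1-nu))) by ring.
  rewrite E4. unfold c. field. auto.
Qed.
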